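(* Let $\omega\in\mathbb{R}^d$, let $I_\omega=\{(k,l)\in\mathbb{Z}^d\times\mathbb{Z}:\langle k,\omega\rangle+l=0\}$, let $c$ be the rank of the lattice $I_\omega$, and let $(p_1,q_1),\dots,(p_c,q_c)\in I_\omega$ be linearly independent. Then $$\mathbb{X}_{p,q}\cap\mathcal{B}_\omega=\overline{\mathcal{B}}_\omega,$$ i.e. every Birkhoff configuration $x$ of rotation vector $\omega$ with $\tau_{p_j,q_j}x=x$ for $j=1,\dots,c$ satisfies $\tau_{k,l}x=x$ for all $(k,l)\in I_\omega$.
   Context: For $(k,l)\in\mathbb{Z}^d\times\mathbb{Z}$ the shift operator $\tau_{k,l}:\mathbb{R}^{\mathbb{Z}^d}\to\mathbb{R}^{\mathbb{Z}^d}$ is $(\tau_{k,l}x)_i=x_{i+k}+l$. On $\mathbb{R}^{\mathbb{Z}^d}$: $x\le y$ iff $x_i\le y_i$ for all $i$. A configuration $x$ is Birkhoff if for every $(k,l)$ either $\tau_{k,l}x\ge x$ or $\tau_{k,l}x\le x$. A vector $\omega\in\mathbb{R}^d$ is the rotation vector of $x$ if for every $i\in\mathbb{Z}^d$, $\lim_{n\to\infty}x_{ni}/n=\langle\omega,i\rangle$. $\mathcal{B}_\omega$ denotes the set of Birkhoff configurations with rotation vector $\omega$, and $\overline{\mathcal{B}}_\omega=\{x\in\mathcal{B}_\omega:\tau_{k,l}x=x\text{ whenever }\langle\omega,k\rangle+l=0\}$. $\mathbb{X}_{p,q}=\{x\in\mathbb{R}^{\mathbb{Z}^d}:\tau_{p_j,q_j}x=x\text{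 for all }j=1,\dots,c\}$. *)

(* Defs.v *)
From Stdlib Require Import Reals.
From HB Require Import structures.
From mathcomp Require Import all_boot all_order all_algebra.
Set Implicit Arguments. Unset Strict Implicit. Unset Printing Implicit Defensive.

Definition Zd (d : nat) := 'rV[int]_d.

Definition int2R (z : int) : R :=
  match z with
  | Posz n => INR n
  | Negz n => Ropp (INR n.+1)
  end.

Definition config (d : nat) := Zd d -> R.

Definition ipR (d : nat) (omega : 'I_d -> R) (k : Zd d) : R :=
  \big[Rplus/R0]_(i < d) Rmult (omega i) (int2R (k ord0 i)).

Definition tau (d : nat) (k : Zd d) (l : int) (x : config d) : config d :=
  fun i => Rplus (x (i + k)%R) (int2R l).

Definition cle (d : nat) (x y : config d) : Prop := forall i, Rle (x i) (y i).

Definition Birkhoff (d : nat) (x : config d) : Prop :=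
  forall (k : Zd d) (l : int), cle x (tau k l x) \/ cle (tau k l x) x.

Definition rotation_vector (d : nat) (omega : 'I_d -> R) (x : config d) : Prop :=
  forall i : Zd d, Un_cv (fun n : nat => Rdiv (x (i *+ n)%R) (INR n)) (ipR omega i).

Definition in_B (d : nat) (omega : 'I_d -> R) (x : config d) : Prop :=
  Birkhoff x /\ rotation_vector omega x.

Definition in_I (d : nat) (omega : 'I_d -> R) (k : Zd d) (l : int) : Prop :=
  Rplus (ipR omega k) (int2R l) = R0.

Definition in_Bbar (d : nat) (omega : 'I_d -> R) (x : config d) : Prop :=
  in_B omega x /\ (forall k l, in_I omega k l -> tau k l x = x).

Definition in_X (d c : nat) (p : 'I_c -> Zd d) (q : 'I_c -> int) (x : config d) : Prop :=
  forall j, tau (p j) (q j) x = x.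

(* linear independence of (p_j, q_j)_{j<c} in Z^d x Z (over Z, equivalently Q) *)
Definition lin_indep (d c : nat) (p : 'I_c -> Zd d) (q : 'I_c -> int) : Prop :=
  forall a : 'I_c -> int,
    (\sum_(j < c) a j *: p j)%R = 0%R -> (\sum_(j < c) a j * q j)%R = 0%R ->
    forall j, a j = 0%R.

Definition rank_I (d : nat) (omega : 'I_d -> R) (c : nat) : Prop :=
  (exists (p : 'I_c -> Zd d) (q : 'I_c -> int),
      (forall j, in_I omega (p j) (q j)) /\ lin_indep p q) /\
  (forall (p : 'I_c.+1 -> Zd d) (q : 'I_c.+1 -> int),
      (forall j, in_I omega (p j) (q j)) -> ~ lin_indep p q).

(* Main.v *)
Require Import Defs.
From Stdlib Require Import Reals Classical FunctionalExtensionality.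
From HB Require Import structures.
From mathcomp Require Import all_boot all_order all_algebra.
From mathcomp Require Import ssrZ zify.
Import GRing.Theory.

Lemma int2R_Z z : int2R z = IZR (Z_of_int z).
Proof.
case: z => n /=; first by rewrite INR_IZR_INZ.
by rewrite opp_IZR -INR_IZR_INZ addn1.
Qed.

Lemma int2RD a b : int2R (a + b)%R = Rplus (int2R a) (int2R b).
Proof. by rewrite !int2R_Z raddfD /= plus_IZR. Qed.

Lemma int2R0 : int2R 0%R = R0.
Proof. by []. Qed.

Lemma tau_comp d (k k' : Zd d) l l' x :
  tau k l (tau k' l' x) = tau (k + k')%R (l + l')%R x.
Proof.
apply: functional_extensionality => i; rewrite /tau int2RD.
by rewrite addrA Rplus_assoc (Rplus_comm (int2R l')).
Qed.

Lemma tau0 d (x : config d) : tau 0%R 0%R x = x.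
Proof.
by apply: functional_extensionality => i; rewrite /tau addr0 int2R0 Rplus_0_r.
Qed.

Lemma fixD d (x : config d) k l k' l' :
  tau k l x = x -> tau k' l' x = x -> tau (k + k')%R (l + l')%R x = x.
Proof. by move=> h1 h2; rewrite -tau_comp h2 h1. Qed.

Lemma fixN d (x : config d) k l :
  tau k l x = x -> tau (- k)%R (- l)%R x = x.
Proof.
by move=> h; rewrite -{1}h tau_comp !addNr tau0.
Qed.

Lemma fixMn d (x : config d) k l n :
  tau k l x = x -> tau (k *+ n)%R (l *+ n)%R x = x.
Proof.
move=> h; elim: n => [|n IH]; first by rewrite !mulr0n tau0.
by rewrite !mulrS fixD.
Qed.

Lemma fixZ d (x : config d) k l (a : int) :
  tau k l x = x -> tau (a *: k)%R (a * l)%R x = x.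
Proof.
move=> h; case: a => n.
  rewrite -[Posz n]natz mulr_natl.
  have -> : (n%:R *: k = k *+ n)%R := scaler_nat n k.
  exact: fixMn.
rewrite NegzE mulNr -[Posz n.+1]natz mulr_natl.
have -> : ((- n.+1%:R) *: k = - (k *+ n.+1))%R.
  by rewrite scaleNr; congr (- _)%R; exact: scaler_nat.
by apply/fixN/fixMn.
Qed.

Lemma fix_sum d c (x : config d) (p : 'I_c -> Zd d) (q : 'I_c -> int) (a : 'I_c -> int) :
  (forall j, tau (p j) (q j) x = x) ->
  tau (\sum_(j < c) a j *: p j)%R (\sum_(j < c) a j * q j)%R x = x.
Proof.
move=> h.
apply: (big_ind2 (fun k l => tau k l x = x)); first exact: tau0.
  by move=> ? ? ? ?; apply: fixD.
by move=> j _; apply: fixZ.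
Qed.

Lemma tau_iter d (x : config d) k l n :
  tau (k *+ n)%R (l *+ n)%R x = iter n (tau k l) x.
Proof.
elim: n => [|n IH]; first by rewrite !mulr0n tau0.
by rewrite iterS -IH tau_comp -!mulrS.
Qed.

Lemma tau_mono d (x y : config d) k l : cle x y -> cle (tau k l x) (tau k l y).
Proof. by move=> h i; rewrite /tau; apply: Rplus_le_compat_r. Qed.

Lemma cle_trans d (x y z : config d) : cle x y -> cle y z -> cle x z.
Proof. by move=> h1 h2 i; apply: Rle_trans (h1 i) (h2 i). Qed.

Lemma cle_refl d (x : config d) : cle x x.
Proof. by move=> i; apply: Rle_refl. Qed.

Lemma cle_anti d (x y : config d) : cle x y -> cle y x -> x = y.
Proof. by move=> h1 h2; apply: functional_extensionality => i; apply: Rle_antisym. Qed.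

Lemma chain d (f : config d -> config d) x :
  (forall u v, cle u v -> cle (f u) (f v)) -> cle x (f x) ->
  forall n, cle (f x) (iter n.+1 f x).
Proof.
move=> mono h; elim => [|n IH]; first exact: cle_refl.
apply: cle_trans IH _; rewrite [iter n.+2 f x]iterS.
have: forall m, cle (iter m f x) (iter m.+1 f x).
  by elim => [|m IHm] //=; apply: mono.
by move=> /(_ n.+1).
Qed.

Lemma chain' d (f : config d -> config d) x :
  (forall u v, cle u v -> cle (f u) (f v)) -> cle (f x) x ->
  forall n, cle (iter n.+1 f x) (f x).
Proof.
move=> mono h; elim => [|n IH]; first exact: cle_refl.
apply: cle_trans _ IH; rewrite [iter n.+2 f x]iterS.
have: forall m, cle (iter m.+1 f x) (iter m f x).
  by elim => [|m IHm] //=; apply: mono.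
by move=> /(_ n.+1).
Qed.

Lemma birk_root d (x : config d) k l n :
  Birkhoff x -> tau (k *+ n.+1)%R (l *+ n.+1)%R x = x -> tau k l x = x.
Proof.
move=> B; rewrite tau_iter => h.
case: (B k l) => hc.
  apply: cle_anti; last exact: hc.
  by have := @chain d (tau k l) x (fun u v => @tau_mono d u v k l) hc n; rewrite h.
apply: cle_anti; first exact: hc.
by have := @chain' d (tau k l) x (fun u v => @tau_mono d u v k l) hc n; rewrite h.
Qed.

Lemma fixZ_root d (x : config d) k l (a : int) :
  Birkhoff x -> a <> 0%R -> tau (a *: k)%R (a * l)%R x = x -> tau k l x = x.
Proof.
move=> B; case: a => [[|n]|n] // _ h.
  apply: (@birk_root d x k l n B).
  move: h; rewrite -[Posz n.+1]natz mulr_natl.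
  by have -> : (n.+1%:R *: k = k *+ n.+1)%R := scaler_nat n.+1 k.
apply: (@birk_root d x k l n B).
move/fixN: h; rewrite NegzE mulNr -[Posz n.+1]natz mulr_natl opprK.
have -> : ((- n.+1%:R) *: k = - (k *+ n.+1))%R.
  by rewrite scaleNr; congr (- _)%R; exact: scaler_nat.
by rewrite opprK.
Qed.

Theorem mainTheorem2 (d : nat) (omega : 'I_d -> R) (c : nat)
    (p : 'I_c -> Zd d) (q : 'I_c -> int) :
  rank_I omega c ->
  (forall j, in_I omega (p j) (q j)) ->
  lin_indep p q ->
  forall x : config d, (in_X p q x /\ in_B omega x) <-> in_Bbar omega x.
Proof.
move=> [_ hrank] hI hind x; split; last first.
  by move=> [hB hfix]; split => // j; apply: hfix.
move=> [hX hB]; split => // k l hkl.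
pose p' : 'I_c.+1 -> Zd d := fun j => if unlift ord_max j is Some j' then p j' else k.
pose q' : 'I_c.+1 -> int := fun j => if unlift ord_max j is Some j' then q j' else l.
have Ew : forall i : 'I_c, unlift ord_max (widen_ord (leqnSn c) i) = Some i.
  move=> i; have -> : widen_ord (leqnSn c) i = lift ord_max i.
    by apply: val_inj => /=; rewrite /bump leqNgt ltn_ord add0n.
  by rewrite liftK.
have Em : unlift (@ord_max c) ord_max = None by rewrite unlift_none.
have hI' : forall j, in_I omega (p' j) (q' j).
  by move=> j; rewrite /p' /q'; case: (unlift ord_max j).
apply: NNPP => hcon; apply: (hrank p' q' hI') => a hA hB2 j.
apply: NNPP => hj; apply: hcon.
rewrite big_ord_recr /= in hA; rewrite big_ord_recr /= in hB2.
rewrite /p' Em in hA; rewrite /q' Em in hB2.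
rewrite (eq_bigr (fun i => a (widen_ord (leqnSn c) i) *: p i)%R) in hA;
  last by move=> i _; rewrite Ew.
rewrite (eq_bigr (fun i => a (widen_ord (leqnSn c) i) * q i)%R) in hB2;
  last by move=> i _; rewrite Ew.
have hA0 : a ord_max <> 0%R.
  move=> h0; apply: hj.
  rewrite h0 scale0r addr0 in hA; rewrite h0 mul0r addr0 in hB2.
  have := hind _ hA hB2.
  case: (unliftP ord_max j) => [i ->|->] //.
  move=> hw; rewrite -(hw i); congr (a _); apply: val_inj => /=; rewrite /bump leqNgt ltn_ord add0n. done.
apply: (@fixZ_root d x k l (a ord_max) hB.1 hA0).
have -> : (a ord_max *: k = \sum_(i < c) (- a (widen_ord (leqnSn c) i)) *: p i)%R.
  under eq_bigr => i _ do rewrite scaleNr.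
  rewrite (@sumrN 'rV[int]_d); apply/eqP; rewrite -addr_eq0 addrC; exact/eqP.
have -> : (a ord_max * l = \sum_(i < c) (- a (widen_ord (leqnSn c) i)) * q i)%R.
  under eq_bigr => i _ do rewrite mulNr.
  rewrite sumrN; apply/eqP; rewrite -addr_eq0 addrC; exact/eqP.
exact: fix_sum.
Qed.
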